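(* For each $i\in\{b,1,2\}$, the function $V_{B_i}(p_1,p_2)$ is convex in $p_1$ (for each fixed $p_2\in[0,1]$) and convex in $p_2$ (for each fixed $p_1\in[0,1]$).
   Context: Fix parameters $0\le\lambda_0\le\lambda_1\le 1$, a discount factor $\beta\in[0,1)$, and rates $0<R_l<R_h<2R_l$. Let $\alpha=\lambda_1-\lambda_0$ and $T(p)=\alpha p+\lambda_0$. The model consists of two independent, identical Gilbert–Elliott channels (state 1 = good, 0 = bad) with $\Pr[\text{good}\mid\text{good}]=\lambda_1$ and $\Pr[\text{good}\mid\text{bad}]=\lambda_0$. The belief state is $(p_1,p_2)\in[0,1]^2$, where $p_i$ is the conditional probability that channel $i$ is good in the current slot. There are three actions, $B_b$, $B_1$ and $B_2$. Let $V:[0,1]^2\to\mathbb R$ be the optimal expected total discounted reward, i.e. the unique bounded function satisfying $V=\max\{V_{B_b},V_{B_1},V_{B_2}\}$, where $V_{B_b}(p_1,p_2)=p_1R_l+p_2R_l+\beta[(1-p_1)(1-p_2)V(\lambda_0,\lambda_0)+p_1(1-p_2)V(\lambda_1,\lambda_0)+(1-p_1)p_2V(\lambda_0,\lambda_1)+p_1p_2V(\lambda_1,\lambda_1)]$, $V_{B_1}(p_1,p_2)=p_1R_h+\beta[(1-p_1)V(\lambda_0,T(p_2))+p_1V(\lambda_1,T(p_2))]$, $V_{B_2}(p_1,p_2)=p_2R_h+\beta[(1-p_2)V(T(p_1),\lambda_0)+p_2V(T(p_1),\lambda_1)]$. *)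

(* Defs.v *)
From Stdlib Require Import Reals Lra.
Open Scope R_scope.

(* Belief update of one channel: T(p) = alpha p + lambda0, alpha = lambda1 - lambda0 *)
Definition Tmap (l0 l1 p : R) : R := (l1 - l0) * p + l0.

Inductive action := Bb | B1 | B2.

Definition VB (l0 l1 beta Rl Rh : R) (V : R -> R -> R) (a : action) (p1 p2 : R) : R :=
  match a with
  | Bb => p1 * Rl + p2 * Rl
          + beta * ((1 - p1) * (1 - p2) * V l0 l0 + p1 * (1 - p2) * V l1 l0
                    + (1 - p1) * p2 * V l0 l1 + p1 * p2 * V l1 l1)
  | B1 => p1 * Rh + beta * ((1 - p1) * V l0 (Tmap l0 l1 p2) + p1 * V l1 (Tmap l0 l1 p2))
  | B2 => p2 * Rh + beta * ((1 - p2) * V (Tmap l0 l1 p1) l0 + p2 * V (Tmap l0 l1 p1) l1)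
  end.

Definition in01 (x : R) : Prop := 0 <= x <= 1.

Definition bounded_on_sq (V : R -> R -> R) : Prop :=
  exists M, forall p1 p2, in01 p1 -> in01 p2 -> Rabs (V p1 p2) <= M.

Definition bellman (l0 l1 beta Rl Rh : R) (V : R -> R -> R) : Prop :=
  forall p1 p2, in01 p1 -> in01 p2 ->
    V p1 p2 = Rmax (Rmax (VB l0 l1 beta Rl Rh V Bb p1 p2)
                         (VB l0 l1 beta Rl Rh V B1 p1 p2))
                   (VB l0 l1 beta Rl Rh V B2 p1 p2).

Definition convex_on01 (f : R -> R) : Prop :=
  forall x y t, in01 x -> in01 y -> in01 t ->
    f (t * x + (1 - t) * y) <= t * f x + (1 - t) * f y.

(* Main.v *)
Require Import Defs.
From Stdlib Require Import Reals.
From Stdlib Require Import Lra Psatz.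
Open Scope R_scope.

Definition D1 (V : R -> R -> R) (K : R) : Prop :=
  forall p2 x y t, in01 p2 -> in01 x -> in01 y -> in01 t ->
    V (t * x + (1 - t) * y) p2 <= t * V x p2 + (1 - t) * V y p2 + K.
Definition D2 (V : R -> R -> R) (K : R) : Prop :=
  forall p1 x y t, in01 p1 -> in01 x -> in01 y -> in01 t ->
    V p1 (t * x + (1 - t) * y) <= t * V p1 x + (1 - t) * V p1 y + K.

Lemma Rabs_le_inv a M : Rabs a <= M -> -M <= a <= M.
Proof. unfold Rabs; destruct (Rcase_abs a); intros; lra. Qed.

Lemma in01_comb x y t : in01 x -> in01 y -> in01 t -> in01 (t * x + (1 - t) * y).
Proof. unfold in01; intros; split; nra. Qed.

Lemma in01_T l0 l1 p : 0 <= l0 -> l0 <= l1 -> l1 <= 1 -> in01 p -> in01 (Tmap l0 l1 p).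
Proof. unfold in01, Tmap; intros; split; nra. Qed.

Lemma T_comb l0 l1 x y t : Tmap l0 l1 (t * x + (1 - t) * y) = t * Tmap l0 l1 x + (1 - t) * Tmap l0 l1 y.
Proof. unfold Tmap; ring. Qed.

Section S.
Variables (l0 l1 beta Rl Rh : R) (V : R -> R -> R).
Hypotheses (Hl0 : 0 <= l0) (Hl01 : l0 <= l1) (Hl1 : l1 <= 1) (Hb0 : 0 <= beta).

Lemma step K : 0 <= K -> D1 V K -> D2 V K -> forall a,
  (forall p2 x y t, in01 p2 -> in01 x -> in01 y -> in01 t ->
     VB l0 l1 beta Rl Rh V a (t * x + (1 - t) * y) p2 <=
     t * VB l0 l1 beta Rl Rh V a x p2 + (1 - t) * VB l0 l1 beta Rl Rh V a y p2 + beta * K) /\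
  (forall p1 x y t, in01 p1 -> in01 x -> in01 y -> in01 t ->
     VB l0 l1 beta Rl Rh V a p1 (t * x + (1 - t) * y) <=
     t * VB l0 l1 beta Rl Rh V a p1 x + (1 - t) * VB l0 l1 beta Rl Rh V a p1 y + beta * K).
Proof.
  intros HK H1 H2 a.
  assert (bK : 0 <= beta * K) by nra.
  destruct a; split; intros p x y t Hp Hx Hy Ht; simpl.
  - assert (E : forall A B, A = B -> A <= B + beta * K) by (intros; lra).
    apply Rle_trans with (t * (x * Rl + p * Rl + beta * ((1 - x) * (1 - p) * V l0 l0 + x * (1 - p) * V l1 l0 + (1 - x) * p * V l0 l1 + x * p * V l1 l1)) +
        (1 - t) * (y * Rl + p * Rl + beta * ((1 - y) * (1 - p) * V l0 l0 + y * (1 - p) * V l1 l0 + (1 - y) * p * V l0 l1 + y * p * V l1 l1))); [right; ring | lra].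
  - apply Rle_trans with (t * (p * Rl + x * Rl + beta * ((1 - p) * (1 - x) * V l0 l0 + p * (1 - x) * V l1 l0 + (1 - p) * x * V l0 l1 + p * x * V l1 l1)) +
        (1 - t) * (p * Rl + y * Rl + beta * ((1 - p) * (1 - y) * V l0 l0 + p * (1 - y) * V l1 l0 + (1 - p) * y * V l0 l1 + p * y * V l1 l1))); [right; ring | lra].
  - apply Rle_trans with (t * (x * Rh + beta * ((1 - x) * V l0 (Tmap l0 l1 p) + x * V l1 (Tmap l0 l1 p))) +
        (1 - t) * (y * Rh + beta * ((1 - y) * V l0 (Tmap l0 l1 p) + y * V l1 (Tmap l0 l1 p)))); [right; ring | lra].
  - rewrite T_comb.
    pose proof (in01_T l0 l1 x Hl0 Hl01 Hl1 Hx) as Tx.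
    pose proof (in01_T l0 l1 y Hl0 Hl01 Hl1 Hy) as Ty.
    assert (h0 := H2 l0 _ _ t ltac:(unfold in01; lra) Tx Ty Ht).
    assert (h1 := H2 l1 _ _ t ltac:(unfold in01; lra) Tx Ty Ht).
    destruct Hp as [Hp0 Hp1].
    assert (g0 := Rmult_le_compat_l (beta * (1 - p)) _ _ ltac:(nra) h0).
    assert (g1 := Rmult_le_compat_l (beta * p) _ _ ltac:(nra) h1).
    lra.
  - rewrite T_comb.
    pose proof (in01_T l0 l1 x Hl0 Hl01 Hl1 Hx) as Tx.
    pose proof (in01_T l0 l1 y Hl0 Hl01 Hl1 Hy) as Ty.
    assert (h0 := H1 l0 _ _ t ltac:(unfold in01; lra) Tx Ty Ht).
    assert (h1 := H1 l1 _ _ t ltac:(unfold in01; lra) Tx Ty Ht).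
    destruct Hp as [Hp0 Hp1].
    assert (g0 := Rmult_le_compat_l (beta * (1 - p)) _ _ ltac:(nra) h0).
    assert (g1 := Rmult_le_compat_l (beta * p) _ _ ltac:(nra) h1).
    lra.
  - apply Rle_trans with (t * (x * Rh + beta * ((1 - x) * V (Tmap l0 l1 p) l0 + x * V (Tmap l0 l1 p) l1)) +
        (1 - t) * (y * Rh + beta * ((1 - y) * V (Tmap l0 l1 p) l0 + y * V (Tmap l0 l1 p) l1))); [right; ring | lra].
Qed.

Lemma max_defect (f g h F : R -> R) c x y t :
  0 <= t <= 1 ->
  F (t * x + (1 - t) * y) = Rmax (Rmax (f (t * x + (1 - t) * y)) (g (t * x + (1 - t) * y))) (h (t * x + (1 - t) * y)) ->
  F x = Rmax (Rmax (f x) (g x)) (h x) -> F y = Rmax (Rmax (f y) (g y)) (h y) ->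
  f (t * x + (1 - t) * y) <= t * f x + (1 - t) * f y + c ->
  g (t * x + (1 - t) * y) <= t * g x + (1 - t) * g y + c ->
  h (t * x + (1 - t) * y) <= t * h x + (1 - t) * h y + c ->
  F (t * x + (1 - t) * y) <= t * F x + (1 - t) * F y + c.
Proof.
  intros Ht Ez Ex Ey a b d. rewrite Ez, Ex, Ey.
  set (z := t * x + (1 - t) * y) in *.
  assert (fx := Rmax_l (f x) (g x)). assert (gx := Rmax_r (f x) (g x)).
  assert (mx := Rmax_l (Rmax (f x) (g x)) (h x)). assert (hx := Rmax_r (Rmax (f x) (g x)) (h x)).
  assert (fy := Rmax_l (f y) (g y)). assert (gy := Rmax_r (f y) (g y)).
  assert (my := Rmax_l (Rmax (f y) (g y)) (h y)). assert (hy := Rmax_r (Rmax (f y) (g y)) (h y)).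
  set (Mx := Rmax (Rmax (f x) (g x)) (h x)) in *.
  set (My := Rmax (Rmax (f y) (g y)) (h y)) in *.
  apply Rmax_lub; [apply Rmax_lub|]; nra.
Qed.

Lemma iter_step K : 0 <= K -> bellman l0 l1 beta Rl Rh V -> D1 V K -> D2 V K ->
  D1 V (beta * K) /\ D2 V (beta * K).
Proof.
  intros HK HB H1 H2.
  pose proof (step K HK H1 H2 Bb) as [b1 b2].
  pose proof (step K HK H1 H2 Defs.B1) as [c1 c2].
  pose proof (step K HK H1 H2 B2) as [d1 d2].
  split; intros p x y t Hp Hx Hy Ht.
  - apply (max_defect (fun u => VB l0 l1 beta Rl Rh V Bb u p) (fun u => VB l0 l1 beta Rl Rh V Defs.B1 u p)
      (fun u => VB l0 l1 beta Rl Rh V B2 u p) (fun u => V u p)); auto.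
    apply HB; auto. apply in01_comb; auto.
  - apply (max_defect (fun u => VB l0 l1 beta Rl Rh V Bb p u) (fun u => VB l0 l1 beta Rl Rh V Defs.B1 p u)
      (fun u => VB l0 l1 beta Rl Rh V B2 p u) (fun u => V p u)); auto.
    apply HB; auto. apply in01_comb; auto.
Qed.

End S.

Theorem lemma2 (l0 l1 beta Rl Rh : R) (V : R -> R -> R)
  (Hl0 : 0 <= l0) (Hl01 : l0 <= l1) (Hl1 : l1 <= 1)
  (Hb0 : 0 <= beta) (Hb1 : beta < 1)
  (HRl : 0 < Rl) (HRlh : Rl < Rh) (HRh : Rh < 2 * Rl)
  (HVb : bounded_on_sq V) (HV : bellman l0 l1 beta Rl Rh V) :
  forall a : action,
    (forall p2, in01 p2 -> convex_on01 (fun p1 => VB l0 l1 beta Rl Rh V a p1 p2)) /\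
    (forall p1, in01 p1 -> convex_on01 (fun p2 => VB l0 l1 beta Rl Rh V a p1 p2)).
Proof.
  destruct HVb as [M HM].
  assert (HM0 : 0 <= M).
  { assert (h := HM 0 0 ltac:(unfold in01; lra) ltac:(unfold in01; lra)).
    pose proof (Rabs_pos (V 0 0)); lra. }
  assert (Hn : forall n, D1 V (2 * M * beta ^ n) /\ D2 V (2 * M * beta ^ n)).
  { induction n as [|n IH].
    - simpl. split; intros p x y t Hp Hx Hy Ht.
      + pose proof (HM _ _ (in01_comb x y t Hx Hy Ht) Hp) as a.
        pose proof (HM _ _ Hx Hp) as b. pose proof (HM _ _ Hy Hp) as c.
        apply Rabs_le_inv in a, b, c. destruct Ht. nra.
      + pose proof (HM _ _ Hp (in01_comb x y t Hx Hy Ht)) as a.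
        pose proof (HM _ _ Hp Hx) as b. pose proof (HM _ _ Hp Hy) as c.
        apply Rabs_le_inv in a, b, c. destruct Ht. nra.
    - destruct IH as [I1 I2].
      assert (P : 0 <= 2 * M * beta ^ n) by (pose proof (pow_le beta n Hb0); nra).
      destruct (iter_step l0 l1 beta Rl Rh V Hl0 Hl01 Hl1 Hb0 _ P HV I1 I2) as [J1 J2].
      replace (2 * M * beta ^ S n) with (beta * (2 * M * beta ^ n)) by (simpl; ring).
      auto. }
  assert (lim : forall d, 0 < d -> exists n, 2 * M * beta ^ n < d).
  { intros d Hd.
    destruct (pow_lt_1_zero beta ltac:(rewrite Rabs_right; lra) (d / (2 * M + 1))
      ltac:(apply Rdiv_lt_0_compat; lra)) as [N HN].
    exists N. specialize (HN N (le_n N)).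
    rewrite Rabs_right in HN by (apply Rle_ge, pow_le; lra).
    apply Rmult_lt_compat_l with (r := 2 * M + 1) in HN; [|lra].
    replace ((2 * M + 1) * (d / (2 * M + 1))) with d in HN by (field; lra).
    pose proof (pow_le beta N Hb0). nra. }
  assert (Z : D1 V 0 /\ D2 V 0).
  { split; intros p x y t Hp Hx Hy Ht; apply Rnot_lt_le; intro Hc.
    - set (d := V (t * x + (1 - t) * y) p - (t * V x p + (1 - t) * V y p)).
      destruct (lim d ltac:(unfold d; lra)) as [n Hn'].
      destruct (Hn n) as [A _]. specialize (A p x y t Hp Hx Hy Ht). unfold d in Hn'. lra.
    - set (d := V p (t * x + (1 - t) * y) - (t * V p x + (1 - t) * V p y)).
      destruct (lim d ltac:(unfold d; lra)) as [n Hn'].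
      destruct (Hn n) as [_ A]. specialize (A p x y t Hp Hx Hy Ht). unfold d in Hn'. lra. }
  destruct Z as [Z1 Z2].
  intro a. destruct (step l0 l1 beta Rl Rh V Hl0 Hl01 Hl1 Hb0 0 (Rle_refl 0) Z1 Z2 a) as [A B].
  split; intros p Hp x y t Hx Hy Ht.
  - specialize (A p x y t Hp Hx Hy Ht). rewrite Rmult_0_r in A. lra.
  - specialize (B p x y t Hp Hx Hy Ht). rewrite Rmult_0_r in B. lra.
Qed.
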